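(* Let $\mathcal{C}_0$ be an $(n,k)$ linear code over $\mathrm{GF}(q^m)$ with generator matrix $\mathbf{G}_0$ and parity-check matrix $\mathbf{H}_0$, let $s\ge1$ and let $\mathbf{B}$ be an $s\times n$ matrix over $\mathrm{GF}(q)$. Then the $s$-th order $\mathbf{B}$-elementary extension $\mathcal{C}_s$ of $\mathcal{C}_0$ is an $(n+s,k+s)$ linear code over $\mathrm{GF}(q^m)$ with generator matrix $\mathbf{G}_s=\begin{pmatrix}\mathbf{G}_0&\mathbf{0}\\ \mathbf{B}&\mathbf{I}_s\end{pmatrix}$ and parity-check matrix $\mathbf{H}_s=\begin{pmatrix}\mathbf{H}_0&-\mathbf{H}_0\mathbf{B}^T\end{pmatrix}$.
   Context: An $(n,k)$ linear code over $\mathrm{GF}(q^m)$ is a $k$-dimensional subspace of $\mathrm{GF}(q^m)^n$; a generator matrix is a $k\times n$ matrix whose rows form a basis, and a parity-check matrix is an $(n-k)\times n$ matrix $\mathbf{H}$ of full rank with $\mathcal{C}=\{\mathbf{c}:\mathbf{H}\mathbf{c}^T=\mathbf{0}\}$. The $s$-th order $\mathbf{B}$-elementary extension of $\mathcal{C}_0$ is $\mathcal{C}_s=\{(c_0,\dots,c_{n+s-1})\in\mathrm{GF}(q^m)^{n+s}:(c_0,\dots,c_{n-1})-(c_n,\dots,c_{n+s-1})\mathbf{B}\in\mathcal{C}_0\}$. *)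

(* Defs.v *)
From HB Require Import structures.
From mathcomp Require Import all_boot all_order all_algebra.
Set Implicit Arguments. Unset Strict Implicit. Unset Printing Implicit Defensive.
Import GRing.Theory.
Local Open Scope ring_scope.

Definition is_linear_code (F : finFieldType) (n k : nat) (C : {set 'rV[F]_n}) : Prop :=
  exists U : 'M[F]_n, \rank U = k /\ forall c : 'rV[F]_n, c \in C <-> (c <= U)%MS.

Definition is_generator_matrix (F : finFieldType) (k n : nat) (C : {set 'rV[F]_n})
  (G : 'M[F]_(k, n)) : Prop :=
  row_free G /\ forall c : 'rV[F]_n, c \in C <-> (c <= G)%MS.

Definition is_parity_check_matrix (F : finFieldType) (r n : nat) (C : {set 'rV[F]_n})
  (H : 'M[F]_(r, n)) : Prop :=
  row_free H /\ forall c : 'rV[F]_n, c \in C <-> H *m c^T = 0.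

Definition in_GFq (F : finFieldType) (q : nat) (x : F) : bool := x ^+ q == x.

Definition elem_ext (F : finFieldType) (n s : nat) (C0 : {set 'rV[F]_n})
  (B : 'M[F]_(s, n)) : {set 'rV[F]_(n + s)} :=
  [set c : 'rV[F]_(n + s) | lsubmx c - rsubmx c *m B \in C0].
Arguments is_linear_code {F} n k C.

(* Main.v *)
Require Import Defs.
From HB Require Import structures.
From mathcomp Require Import all_boot all_order all_algebra.
Import GRing.Theory.
Local Open Scope ring_scope.

Theorem lemma6 (F : finFieldType) (q m : nat) (hm : (0 < m)%N)
  (hF : #|F| = (q ^ m)%N) (n k s : nat) (hs : (1 <= s)%N)
  (C0 : {set 'rV[F]_n}) (G0 : 'M[F]_(k, n)) (H0 : 'M[F]_(n - k, n))
  (B : 'M[F]_(s, n)) :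
  is_linear_code n k C0 ->
  is_generator_matrix C0 G0 ->
  is_parity_check_matrix C0 H0 ->
  (forall i j, in_GFq q (B i j)) ->
  let Cs := elem_ext C0 B in
  [/\ is_linear_code (n + s) (k + s) Cs,
      is_generator_matrix Cs (block_mx G0 0 B 1%:M : 'M[F]_(k + s, n + s))
    & is_parity_check_matrix Cs (row_mx H0 (- (H0 *m B^T)) : 'M[F]_(n - k, n + s))].
Proof.
move=> _ [fG0 hG0] [fH0 hH0] _ Cs.
set Gs := (block_mx G0 0 B 1%:M : 'M[F]_(k + s, n + s)).
have memG : forall c : 'rV[F]_(n + s), c \in Cs <-> (c <= Gs)%MS.
  move=> c; rewrite inE; split.
    move=> /hG0 /submxP [D hD]; apply/submxP; exists (row_mx D (rsubmx c)).
    rewrite /Gs mul_row_block mulmx0 mulmx1 add0r -hD subrK.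
    by rewrite hsubmxK.
  move=> /submxP [D ->]; apply/hG0.
  rewrite -(hsubmxK D) /Gs mul_row_block mulmx0 mulmx1 add0r.
  rewrite row_mxKl row_mxKr addrK; exact: submxMl.
have fGs : row_free Gs.
  apply: inj_row_free => v; rewrite -(hsubmxK v) /Gs mul_row_block mulmx0 mulmx1 add0r.
  move=> /eqP; rewrite row_mx_eq0 => /andP [/eqP h1 /eqP h2].
  rewrite h2 mul0mx addr0 in h1.
  have h3 : lsubmx v = 0 by apply: (row_free_inj fG0); rewrite h1 mul0mx.
  by rewrite h2 h3 row_mx0.
split.
- exists <<Gs>>%MS; split.
    by rewrite mxrank_gen; apply/eqP.
  by move=> c; rewrite genmxE; exact: memG.
- by split.
- split.
    apply: inj_row_free => v; rewrite mul_mx_row.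
    move=> /eqP; rewrite row_mx_eq0 => /andP [/eqP h1 _].
    by apply: (row_free_inj fH0); rewrite h1 mul0mx.
  move=> c; rewrite inE.
  have E : row_mx H0 (- (H0 *m B^T)) *m c^T = H0 *m (lsubmx c - rsubmx c *m B)^T.
    rewrite -[in LHS](hsubmxK c) tr_row_mx mul_row_col.
    by rewrite linearB /= trmx_mul mulmxBr mulNmx mulmxA.
  by rewrite E; exact: hH0.
Qed.
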